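(* Let $\mathbf{A}$ be a 5-dimensional LV algebra with natural basis $e_1,\dots,e_5$ such that $e_4e_j=\frac12(e_4+e_j)$ for $j=1,2,3,5$, and $e_ie_j\neq\frac12(e_i+e_j)$ for all distinct $i,j\in\{1,2,3,5\}$. Then $\mathrm{Der}(\mathbf{A})=\{0\}$.
   Context: Let $\mathbb{F}$ be a field of characteristic different from $2$. A Lotka–Volterra (LV) algebra of dimension $5$ over $\mathbb{F}$ is a commutative (not necessarily associative) $\mathbb{F}$-algebra $\mathbf{A}$ with a basis $e_1,\dots,e_5$ (the natural basis) such that $e_ie_j=\alpha_{ij}e_i+\alpha_{ji}e_j$ with $\alpha_{ij}\in\mathbb{F}$, $\alpha_{ii}=\frac12$ and $\alpha_{ij}+\alpha_{ji}=1$ for all $i,j$. A derivation is a linear map $D:\mathbf{A}\to\mathbf{A}$ with $D(uv)=D(u)v+uD(v)$ for all $u,v$; $\mathrm{Der}(\mathbf{A})$ is the set of derivations. *)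

(* Defs.v *)
From HB Require Import structures.
From mathcomp Require Import all_boot all_order all_algebra.
Set Implicit Arguments. Unset Strict Implicit. Unset Printing Implicit Defensive.
Import Order.TTheory GRing.Theory Num.Theory.
Local Open Scope ring_scope.

(* The natural basis e_1,...,e_5 of F^5, indexed 0..4 (e_{k+1} = lv_e k). *)
Definition lv_e (F : fieldType) (i : 'I_5) : 'rV[F]_5 := delta_mx 0 i.

Definition i4 : 'I_5 := @Ordinal 5 3 isT.

(* Structure constants a i j = alpha_{ij}: e_i e_j = a i j e_i + a j i e_j,
   with the product extended bilinearly. *)
Definition lvmul (F : fieldType) (a : 'I_5 -> 'I_5 -> F) (u v : 'rV[F]_5)
  : 'rV[F]_5 :=
  \sum_(i < 5) \sum_(j < 5)
     (u 0 i * v 0 j) *: (a i j *: lv_e F i + a j i *: lv_e F j).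

Definition is_LV (F : fieldType) (a : 'I_5 -> 'I_5 -> F) : Prop :=
  (forall i, a i i = 2^-1) /\ (forall i j, a i j + a j i = 1).

Definition is_derivation (F : fieldType) (a : 'I_5 -> 'I_5 -> F)
  (D : 'rV[F]_5 -> 'rV[F]_5) : Prop :=
  forall u v, D (lvmul a u v) = lvmul a (D u) v + lvmul a u (D v).

(* Main.v *)
Require Import Defs.
From HB Require Import structures.
From mathcomp Require Import all_boot all_order all_algebra.
Import Order.TTheory GRing.Theory Num.Theory.
Local Open Scope ring_scope.
Lemma e_coord F (i k : 'I_5) : lv_e F i 0 k = (i == k)%:R.
Proof. by rewrite /lv_e mxE eqxx eq_sym. Qed.
Lemma lvmul_e_coord F a (i : 'I_5) v k :
  lvmul a (lv_e F i) v 0 k =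
  (i == k)%:R * (\sum_j v 0 j * a i j) + v 0 k * a k i.
Proof.
rewrite /lvmul summxE.
under eq_bigr => i' _ do rewrite summxE.
under eq_bigr => i' _ do under eq_bigr => j _ do rewrite !mxE.
rewrite (bigD1 i) //= [X in _ + X]big1 ?addr0 => [|i' ne]; last first.
  by rewrite big1 // => j _; rewrite (negbTE ne) !mul0r.
rewrite eqxx.
under eq_bigr => j _ do rewrite mul1r mulrDr.
rewrite big_split /= mulr_sumr; congr (_ + _).
  by apply: eq_bigr => j _; rewrite eq_sym; case: (i == k); rewrite /= ?mulr1 ?mulr0 ?mul1r ?mul0r // mulrC.
rewrite (bigD1 k) //= [X in _ + X]big1 ?addr0 => [|j ne]; last by rewrite eq_sym (negbTE ne) !mulr0.
by rewrite eqxx mulr1.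
Qed.

Lemma lvmulC (F : fieldType) a (u v : 'rV[F]_5) : lvmul a u v = lvmul a v u.
Proof.
rewrite /lvmul exchange_big; apply: eq_bigr => i _; apply: eq_bigr => j _.
by rewrite mulrC addrC.
Qed.

Lemma sum_e (F : fieldType) (j : 'I_5) (c : 'I_5 -> F) :
  \sum_l lv_e F j 0 l * c l = c j.
Proof.
rewrite (bigD1 j) //= big1 ?addr0 => [|l nl]; last first.
  by rewrite e_coord eq_sym (negbTE nl) mul0r.
by rewrite e_coord eqxx mul1r.
Qed.

Lemma lvmul_ee (F : fieldType) a (i j : 'I_5) :
  lvmul a (lv_e F i) (lv_e F j) = a i j *: lv_e F i + a j i *: lv_e F j.
Proof.
apply/rowP => k; rewrite lvmul_e_coord sum_e !mxE -!e_coord !e_coord (eq_sym k i).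
by case: (i == k); case: (k =P j) => [->|_];
  rewrite /= ?mulr1 ?mulr0 ?mul1r ?mul0r ?addr0 ?add0r // mulrC.
Qed.

Lemma sol {F : fieldType} {x c L R : F} : L = R -> L - R = x * c -> c != 0 -> x = 0.
Proof.
move=> -> e nc; move: e; rewrite subrr => /esym/eqP.
by rewrite mulf_eq0 (negbTE nc) orbF => /eqP.
Qed.

From mathcomp Require Import ring.

Theorem mainTheorem16 (F : fieldType) (a : 'I_5 -> 'I_5 -> F) :
  (2%:R : F) != 0 ->
  is_LV a ->
  (forall j : 'I_5, j != i4 ->
     lvmul a (lv_e F i4) (lv_e F j) = 2^-1 *: (lv_e F i4 + lv_e F j)) ->
  (forall i j : 'I_5, i != i4 -> j != i4 -> i != j ->
     lvmul a (lv_e F i) (lv_e F j) != 2^-1 *: (lv_e F i + lv_e F j)) ->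
  forall D : {linear 'rV[F]_5 -> 'rV[F]_5},
    is_derivation a D -> forall u, D u = 0.
Proof.
move=> h2 [hd hs] h4 hS D hD.
have hh : (2^-1 : F) + 2^-1 = 1.
  by field.
have hn : (2^-1 : F) != 0 by rewrite invr_eq0.
have a4 : forall j, a i4 j = 2^-1 /\ a j i4 = 2^-1.
  move=> j; case: (eqVneq j i4) => [->|nj]; first by rewrite hd.
  have := congr1 (fun M : 'rV[F]_5 => M 0 i4) (h4 j nj).
  rewrite lvmul_ee !mxE -!e_coord !e_coord eqxx eq_sym (negbTE nj) /= mulr1 mulr0 !addr0 mulr1 => e.
  split => //; apply: (@addrI _ (a i4 j)); rewrite hs e hh //.
have aS : forall i j, i != i4 -> j != i4 -> i != j -> a i j != 2^-1.
  move=> i j ni nj nij; apply/eqP => e; apply: (negP (hS i j ni nj nij)); apply/eqP.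
  have e2 : a j i = 2^-1.
    by apply: (@addrI _ (a i j)); rewrite hs e hh.
  by rewrite lvmul_ee e e2 scalerDr.
set h := (2^-1 : F) in hh hn a4 aS hd.
pose d (i k : 'I_5) : F := D (lv_e F i) 0 k.
have E : forall i j k, a i j * d i k + a j i * d j k =
    (j == k)%:R * (\sum_l d i l * a j l) + d i k * a k j +
    ((i == k)%:R * (\sum_l d j l * a i l) + d j k * a k i).
  move=> i j k; have := congr1 (fun M : 'rV[F]_5 => M 0 k) (hD (lv_e F i) (lv_e F j)).
  rewrite lvmul_ee linearD !linearZ /= [lvmul a (D _) _]lvmulC !mxE.
  by rewrite !lvmul_e_coord.
have partner : forall k : 'I_5, k != i4 -> exists i : 'I_5, i != i4 /\ i != k.
  move=> k _; case: (eqVneq k (@Ordinal 5 0 isT)) => [->|nk].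
    by exists (@Ordinal 5 1 isT).
  by exists (@Ordinal 5 0 isT); split; rewrite // eq_sym.
have hA : forall i k, i != k -> a k i != h -> d i k = 0.
  move=> i k nik ne; have := E i i k; rewrite (negbTE nik) hd => Heq.
  apply: (sol (c := (h - a k i) * 2%:R) Heq); first by rewrite /=; ring.
  by rewrite mulf_neq0 // subr_eq0 eq_sym.
have hB : forall k, k != i4 -> d i4 k = 0.
  move=> k nk; have [i [ni nik]] := partner k nk.
  have := E i i4 k; rewrite (negbTE nik) [i4 == k]eq_sym (negbTE nk).
  rewrite (a4 i).1 (a4 i).2 (a4 k).2 (hA i k nik); last by apply: aS; rewrite // eq_sym.
  move=> Heq; apply: (sol (c := h - a k i) Heq); first by rewrite /=; ring.
  by rewrite subr_eq0 eq_sym aS // eq_sym.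
have d44 : d i4 i4 = 0.
  have := E i4 i4 i4; rewrite eqxx hd.
  rewrite (bigD1 i4) //= big1 => [|l nl]; last by rewrite hB // mul0r.
  move=> Heq; apply: (sol (c := - (h + h)) Heq); first by rewrite /= hd; ring.
  by rewrite hh oppr_eq0 oner_eq0.
have hC : forall j, j != i4 -> d j j = 0 /\ d j i4 = 0.
  move=> j nj; have [i [ni nij]] := partner j nj.
  have dz : forall l, l != j -> l != i4 -> d j l = 0.
    by move=> l n1 n2; apply: hA; [rewrite eq_sym | apply: aS].  
  have sumj : forall c : 'I_5 -> F, \sum_l d j l * c l = d j j * c j + d j i4 * c i4.
    move=> c; rewrite (bigD1 j) //= (bigD1 i4) /=; last by rewrite eq_sym.
    by rewrite big1 ?addr0 // => l /andP[n1 n2]; rewrite dz // mul0r.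
  have eq1 : d j j * a i j + d j i4 * h = 0.
    have := E i j i; rewrite [j == i]eq_sym (negbTE nij) eqxx sumj (dz i nij ni) (a4 i).2.
    move=> Heq; apply: (sol (c := -1) Heq); first by rewrite /=; ring.
    by rewrite oppr_eq0 oner_eq0.
  have eq2 : d j j * h + d j i4 * h = 0.
    have := E j j j; rewrite eqxx sumj hd (a4 j).2.
    move=> Heq; apply: (sol (c := - 2%:R) Heq); first by rewrite /=; ring.
    by rewrite oppr_eq0.
  have djj : d j j = 0.
    have E3 : d j j * a i j + d j i4 * h = d j j * h + d j i4 * h by rewrite eq1 eq2.
    apply: (sol (c := a i j - h) E3); first by ring.
    by rewrite subr_eq0 aS // eq_sym.
  split => //; move: eq2; rewrite djj mul0r add0r => /eqP.
  by rewrite mulf_eq0 (negbTE hn) orbF => /eqP.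
have dall : forall k l, d k l = 0.
  move=> k l; case: (eqVneq k i4) => [->|nk].
    by case: (eqVneq l i4) => [->|nl]; [exact: d44 | exact: hB].
  case: (eqVneq l k) => [->|nlk]; first exact: (hC k nk).1.
  case: (eqVneq l i4) => [->|nl]; first exact: (hC k nk).2.
  by apply: hA; [rewrite eq_sym | apply: aS].
move=> u; rewrite (row_sum_delta u) linear_sum big1 // => k _.
rewrite linearZ /=.
have -> : D (delta_mx 0 k) = 0.
  by apply/rowP => l; rewrite mxE; exact: dall k l.
by rewrite scaler0.
Qed.
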